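(* Let $G$ be a finite group and $p$ a prime such that the Sylow $p$-subgroups of $G$ are not normal. Then the set $G_p$ of $p$-elements of $G$ cannot be covered by (is not contained in the union of) $p$ Sylow $p$-subgroups of $G$. In particular, if $\nu_p(G)=p+1$, then $G$ does not have a redundant Sylow $p$-subgroup.
   Context: $\mathrm{Syl}_p(G)$ denotes the set of Sylow $p$-subgroups of $G$ and $\nu_p(G)=|\mathrm{Syl}_p(G)|$. $G$ is said to have a redundant Sylow $p$-subgroup if $G_p$ is contained in the union of the members of some proper subset of $\mathrm{Syl}_p(G)$. *)

(* Defs.v *)
From mathcomp Require Import all_boot all_fingroup all_solvable.
Set Implicit Arguments. Unset Strict Implicit. Unset Printing Implicit Defensive.
Local Open Scope group_scope.

Definition p_elements (gT : finGroupType) (p : nat) (G : {set gT}) : {set gT} :=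
  [set x in G | p.-elt x].

Definition covers_p_elements (gT : finGroupType) (p : nat) (G : {set gT})
    (S : {set {group gT}}) : bool :=
  p_elements p G \subset \bigcup_(P in S) P.

Definition nu (gT : finGroupType) (p : nat) (G : {set gT}) : nat := #|'Syl_p(G)|.

Definition has_redundant_sylow (gT : finGroupType) (p : nat) (G : {set gT}) : Prop :=
  exists S : {set {group gT}}, S \proper 'Syl_p(G) /\ covers_p_elements p G S.

(* Main.v *)
Require Import Defs.
From mathcomp Require Import all_boot all_fingroup all_solvable.
From mathcomp Require Import zify.
Local Open Scope group_scope.

Lemma card_bigcup_le (I T : finType) (S : {pred I}) (F : I -> {set T}) :
  #|\bigcup_(i in S) F i| <= \sum_(i in S) #|F i|.
Proof.
apply: (big_ind2 (fun (B : {set T}) n => #|B| <= n)) => //.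
- by rewrite cards0.
- move=> B1 n1 B2 n2 h1 h2; apply: leq_trans (leq_card_setU _ _) _.
  exact: leq_add.
Qed.

Lemma part1 (gT : finGroupType) (G : {group gT}) (p : nat) :
  prime p ->
  (forall P : {group gT}, P \in 'Syl_p(G) -> ~~ (P <| G)) ->
  (forall S : {set {group gT}}, S \subset 'Syl_p(G) -> #|S| <= p ->
     ~~ covers_p_elements p G S).
Proof.
move=> pr nN S sS leS; apply/negP => cov.
have p2 : 1 < p by exact: prime_gt1.
have nu1 : 1 < #|'Syl_p(G)|.
  have := card_Syl_mod G pr.
  case E: #|'Syl_p(G)| => [|[|n]] //.
  - by rewrite mod0n.
  - move=> _; move/eqP: E => /normal_sylowP [P sP nP].
    by have := nN P; rewrite inE sP nP => /(_ isT).
have nuge : p < #|'Syl_p(G)|.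
  have m := card_Syl_mod G pr.
  have e := divn_eq #|'Syl_p(G)| p; rewrite m in e.
  move: e nu1; case: (#|'Syl_p(G)| %/ p) => [|k] e; rewrite e; nia.
have : ~~ ('Syl_p(G) \subset S).
  apply/negP => h; have := leq_trans (subset_leq_card h) leS; by rewrite leqNgt nuge.
case/subsetPn => Q QS QnS.
have sylQ : p.-Sylow(G) Q by move: QS; rewrite inE.
have pQ := pHall_pgroup sylQ.
have sQG := pHall_sub sylQ.
have [k ek] := p_natP pQ.
have k0 : 0 < k.
  case: k ek => // e.
  have Q1 : Q :=: 1 by apply/eqP; rewrite trivg_card1 e.
  by have := nN Q QS; rewrite Q1 normal1.
set b := (p ^ k.-1)%N.
have qb : #|Q| = (b * p)%N by rewrite ek /b -expnSr prednK.
have bnd : forall P : {group gT}, P \in S -> #|Q :&: P| <= b.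
  move=> P PS.
  have sylP : p.-Sylow(G) P by have := subsetP sS P PS; rewrite inE.
  have QP : ~~ (Q \subset Q :&: P).
    apply/negP; rewrite subsetI subxx /= => sQP.
    have eqQP : Q :=: P.
      apply/eqP; rewrite eqEcard sQP (card_Hall sylQ) (card_Hall sylP) leqnn.
      done.
    have : Q = P by apply: val_inj; exact: eqQP.
    by move=> eQP; move: QnS; rewrite eQP PS.
  have ig := indexg_gt1 Q (Q :&: P); rewrite QP in ig.
  have pi : p.-nat #|Q : Q :&: P|.
    by apply: pnat_dvd (dvdn_indexg _ _) pQ.
  have [j ej] := p_natP pi.
  have j0 : 0 < j by case: j ej ig => // ->.
  have L := Lagrange (subsetIl Q P).
  have pj : p <= #|Q : Q :&: P|.
    by rewrite ej; apply: leq_trans (leq_pexp2l (ltnW p2) j0); rewrite expn1.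
  have : (#|Q :&: P| * p <= b * p)%N.
    by rewrite -qb -L leq_mul2l pj orbT.
  by rewrite leq_mul2r; case: (p) p2.
have sub : Q :\ 1 \subset \bigcup_(P in S) ((Q :&: P) :\ 1).
  apply/subsetP => x; rewrite !inE => /andP [nx Qx].
  have xGp : x \in p_elements p G.
    by rewrite /p_elements inE (subsetP sQG _ Qx) (mem_p_elt pQ Qx).
  have /bigcupP [P PS xP] := subsetP cov x xGp.
  by apply/bigcupP; exists P => //; rewrite !inE nx Qx xP.
have h1 := subset_leq_card sub.
have h2 := @card_bigcup_le _ _ S (fun P : {group gT} => (Q :&: P) :\ 1).
have h3 : (\sum_(P in S) #|(Q :&: P) :\ 1%g| <= \sum_(P in S) (b - 1))%N.
  apply: leq_sum => P PS.
  have := cardsD1 1 (Q :&: P); rewrite group1 /=.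
  move=> H2; apply: leq_trans (leq_sub2r 1 (bnd P PS)); by rewrite H2 add1n subn1.
rewrite sum_nat_const in h3.
have h4 := cardsD1 1 Q; rewrite group1 /= in h4.
have hb : 0 < b by rewrite /b expn_gt0 (ltnW p2).
have h5 : (#|S| * (b - 1) <= p * (b - 1))%N by rewrite leq_mul2r leS orbT.
have H : (#|Q^#| <= p * (b - 1))%N.
  apply: leq_trans h1 _; apply: leq_trans h2 _; apply: leq_trans h3 _; exact: h5.
have h4' : (b * p = 1 + #|Q^#|)%N by rewrite -qb; exact: h4.
move: H h4' p2 hb; clearbody b; clear; nia.
Qed.

Theorem theorem8p2 (gT : finGroupType) (G : {group gT}) (p : nat) :
  prime p ->
  (forall P : {group gT}, P \in 'Syl_p(G) -> ~~ (P <| G)) ->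
  (forall S : {set {group gT}}, S \subset 'Syl_p(G) -> #|S| <= p ->
     ~~ covers_p_elements p G S)
  /\ (nu p G = p.+1 -> ~ has_redundant_sylow p G).
Proof.
move=> pr nN; split; first exact: part1.
move=> hnu [S [pS cov]].
have := @part1 gT G p pr nN S (proper_sub pS).
have := proper_card pS; rewrite /nu in hnu; rewrite hnu ltnS => -> /(_ isT).
by rewrite cov.
Qed.
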